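(* Consider the ODE system $$\frac{du}{dt}=\frac{a_1u}{1+fv}-b_1u^2-c_1uv,\qquad \frac{dv}{dt}=a_2v-b_2v^2-c_2uv,$$ with positive parameters $a_1,a_2,b_1,b_2,c_1,c_2$, and regard $f$ as the bifurcation parameter. Let $E_3=(0,v^* )$ with $v^*=\frac{a_2}{b_2}$, and let $$f^*=\frac{b_2(a_1b_2-a_2c_1)}{a_2^2c_1}.$$ If $$\frac{a_1f^*}{(1+f^*v^* )^2}+c_1-\frac{b_1b_2}{c_2}\neq0,$$ then the system undergoes a transcritical bifurcation around $E_3$ at $f=f^*$. *)

(* Defs.v *)
From Stdlib Require Import Reals Lra.
From Coquelicot Require Import Coquelicot.
Open Scope R_scope.

(* A planar vector field depending on a real parameter mu:
     x' = F mu x y,   y' = G mu x y. *)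

Definition equilibrium (F G : R -> R -> R -> R) (mu x y : R) : Prop :=
  F mu x y = 0 /\ G mu x y = 0.

Definition j11 (F : R -> R -> R -> R) mu x y := Derive (fun x' => F mu x' y) x.
Definition j12 (F : R -> R -> R -> R) mu x y := Derive (fun y' => F mu x y') y.

Definition partials_exist (F G : R -> R -> R -> R) (mu x y : R) : Prop :=
  ex_derive (fun x' => F mu x' y) x /\ ex_derive (fun y' => F mu x y') y /\
  ex_derive (fun x' => G mu x' y) x /\ ex_derive (fun y' => G mu x y') y.

Definition jac_eigenvalue (F G : R -> R -> R -> R) (mu x y : R) (l : C) : Prop :=
  Cminus (Cmult (Cminus l (RtoC (j11 F mu x y))) (Cminus l (RtoC (j12 G mu x y))))
         (RtoC (j12 F mu x y * j11 G mu x y)) = RtoC 0.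

Definition lin_stable (F G : R -> R -> R -> R) (mu x y : R) : Prop :=
  partials_exist F G mu x y /\
  forall l : C, jac_eigenvalue F G mu x y l -> Re l < 0.

Definition lin_unstable (F G : R -> R -> R -> R) (mu x y : R) : Prop :=
  partials_exist F G mu x y /\
  exists l : C, jac_eigenvalue F G mu x y l /\ 0 < Re l.

Definition transcritical_bifurcation (F G : R -> R -> R -> R) (mu0 x0 y0 : R) : Prop :=
  exists (delta eps : R) (p1 q1 p2 q2 : R -> R),
    0 < delta /\ 0 < eps /\
    p1 mu0 = x0 /\ q1 mu0 = y0 /\ p2 mu0 = x0 /\ q2 mu0 = y0 /\
    (forall mu, Rabs (mu - mu0) < delta ->
       continuous p1 mu /\ continuous q1 mu /\ continuous p2 mu /\ continuous q2 mu) /\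
    (forall mu, Rabs (mu - mu0) < delta ->
       equilibrium F G mu (p1 mu) (q1 mu) /\ equilibrium F G mu (p2 mu) (q2 mu)) /\
    (forall mu, Rabs (mu - mu0) < delta -> mu <> mu0 ->
       (p1 mu, q1 mu) <> (p2 mu, q2 mu)) /\
    (forall mu x y, Rabs (mu - mu0) < delta -> Rabs (x - x0) < eps ->
       Rabs (y - y0) < eps -> equilibrium F G mu x y ->
       (x = p1 mu /\ y = q1 mu) \/ (x = p2 mu /\ y = q2 mu)) /\
    (forall mu, mu0 - delta < mu < mu0 ->
       lin_stable F G mu (p1 mu) (q1 mu) /\ lin_unstable F G mu (p2 mu) (q2 mu)) /\
    (forall mu, mu0 < mu < mu0 + delta ->
       lin_unstable F G mu (p1 mu) (q1 mu) /\ lin_stable F G mu (p2 mu) (q2 mu)).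

Definition Fu (a1 b1 c1 : R) (f u v : R) : R :=
  a1 * u / (1 + f * v) - b1 * u ^ 2 - c1 * u * v.
Definition Gv (a2 b2 c2 : R) (f u v : R) : R :=
  a2 * v - b2 * v ^ 2 - c2 * u * v.

(* Main.v *)
Require Import Defs.
From Stdlib Require Import Reals Lra Psatz.
From Coquelicot Require Import Coquelicot.
Open Scope R_scope.


Lemma ev_lt (g : R -> R) x lo hi : continuous g x -> lo < g x < hi ->
  locally x (fun y => lo < g y < hi).
Proof.
  intros Hc Hb. apply (Hc (fun z => lo < z < hi)).
  assert (He : 0 < Rmin (g x - lo) (hi - g x)) by (apply Rmin_pos; lra).
  exists (mkposreal _ He). intros y Hy. simpl in Hy.
  unfold ball in Hy; simpl in Hy; unfold AbsRing_ball, abs, minus, plus, opp in Hy; simpl in Hy.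
  apply Rabs_def2 in Hy. pose proof (Rmin_l (g x - lo) (hi - g x)).
  pose proof (Rmin_r (g x - lo) (hi - g x)). lra.
Qed.

Lemma loc_ball x P : locally x P -> exists d, 0 < d /\ forall y, Rabs (y - x) < d -> P y.
Proof.
  intros [e He]. exists e. split; [apply cond_pos|]. intros y Hy. apply He.
  unfold ball; simpl; unfold AbsRing_ball, abs, minus, plus, opp; simpl. exact Hy.
Qed.

Lemma jac_F a1 b1 c1 f u v : 1 + f * v <> 0 ->
  ex_derive (fun x' => Fu a1 b1 c1 f x' v) u /\
  Derive (fun x' => Fu a1 b1 c1 f x' v) u = a1 / (1 + f * v) - 2 * b1 * u - c1 * v /\
  ex_derive (fun y' => Fu a1 b1 c1 f u y') v /\
  Derive (fun y' => Fu a1 b1 c1 f u y') v = - (a1 * u * f / (1 + f * v) ^ 2) - c1 * u.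
Proof.
  intros H. unfold Fu. repeat split.
  - auto_derive; auto.
  - apply is_derive_unique. auto_derive; [auto| field; auto].
  - auto_derive; auto.
  - apply is_derive_unique. auto_derive; [auto| field; auto].
Qed.

Lemma jac_G a2 b2 c2 f u v :
  ex_derive (fun x' => Gv a2 b2 c2 f x' v) u /\
  Derive (fun x' => Gv a2 b2 c2 f x' v) u = - c2 * v /\
  ex_derive (fun y' => Gv a2 b2 c2 f u y') v /\
  Derive (fun y' => Gv a2 b2 c2 f u y') v = a2 - 2 * b2 * v - c2 * u.
Proof.
  unfold Gv. repeat split.
  - auto_derive; auto.
  - apply is_derive_unique. auto_derive; [auto| ring].
  - auto_derive; auto.
  - apply is_derive_unique. auto_derive; [auto| ring].
Qed.

Lemma stable_quad a b c d : a + d < 0 -> 0 < a * d - b * c -> forall l : C,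
  Cminus (Cmult (Cminus l (RtoC a)) (Cminus l (RtoC d))) (RtoC (b * c)) = RtoC 0 -> Re l < 0.
Proof.
  intros Ht Hd [x y] Heq. apply (f_equal fst) in Heq as E1. apply (f_equal snd) in Heq as E2.
  simpl in E1, E2. simpl.
  destruct (Req_dec y 0) as [Hy|Hy].
  - subst y. nra.
  - assert (2 * x - a - d = 0).
    { apply (Rmult_eq_reg_l y); [|auto]. nra. }
    lra.
Qed.

Lemma unstable_quad a b c d : a * d - b * c < 0 -> exists l : C,
  Cminus (Cmult (Cminus l (RtoC a)) (Cminus l (RtoC d))) (RtoC (b * c)) = RtoC 0 /\ 0 < Re l.
Proof.
  intros Hd. set (T := a + d). set (Dl := (a - d)^2 + 4 * (b * c)).
  assert (HD : 0 < Dl) by (unfold Dl; assert (0 <= (a+d)^2) by apply pow2_ge_0; nra).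
  pose proof (sqrt_sqrt Dl (Rlt_le _ _ HD)) as Hs.
  pose proof (sqrt_pos Dl).
  exists (RtoC ((T + sqrt Dl) / 2)). split.
  - apply injective_projections; simpl; unfold T, Dl in *; nra.
  - simpl. assert (T * T < Dl) by (unfold T, Dl; nra). nra.
Qed.

Lemma unstable_diag a c d : 0 < a -> exists l : C,
  Cminus (Cmult (Cminus l (RtoC a)) (Cminus l (RtoC d))) (RtoC (0 * c)) = RtoC 0 /\ 0 < Re l.
Proof.
  intros Ha. exists (RtoC a). split.
  - apply injective_projections; simpl; ring.
  - simpl. lra.
Qed.

Lemma ev_d (g : R -> R) x lo hi : ex_derive g x -> lo < g x < hi ->
  locally x (fun y => lo < g y < hi).
Proof. intros H1 H2. apply ev_lt; auto. exact (@ex_derive_continuous R_AbsRing R_NormedModule g x H1). Qed.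

Lemma abs_bounds x : - (Rabs x + 1) < x < Rabs x + 1.
Proof. pose proof (Rle_abs x). pose proof (Rle_abs (-x)). rewrite Rabs_Ropp in H0. lra. Qed.


Lemma quad_root A B C sg : sg * sg = 1 -> 0 <= B^2 - 4*A*C ->
  B + sg * sqrt (B^2 - 4*A*C) <> 0 ->
  A * (-2 * C / (B + sg * sqrt (B^2 - 4*A*C)))^2 + B * (-2 * C / (B + sg * sqrt (B^2 - 4*A*C))) + C = 0.
Proof.
  intros Hs HD Hd.
  set (s := sqrt (B^2 - 4*A*C)) in *. assert (Hss : s * s = B^2 - 4*A*C) by (apply sqrt_sqrt; auto).
  set (d := B + sg * s) in *.
  assert (E : d * d = 2 * B * d - 4 * A * C).
  { unfold d. transitivity (B*B + (sg*sg)*(s*s) + 2*B*sg*s); [ring|]. rewrite Hs, Hss. ring. }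
  replace (A * (-2 * C / d)^2 + B * (-2 * C / d) + C) with (C * (d*d - 2*B*d + 4*A*C) / (d*d)) by (field; auto).
  replace (d*d - 2*B*d + 4*A*C) with 0 by lra. unfold Rdiv; ring.
Qed.

Lemma sg_cases sg : sg * sg = 1 -> sg = 1 \/ sg = -1.
Proof. intros H. assert ((sg - 1) * (sg + 1) = 0) by nra.
  apply Rmult_integral in H0. destruct H0; [left|right]; lra. Qed.

Lemma sign_UD sg U C d D : sg * sg = 1 -> 0 < sg * d -> U = -2 * C / d -> sg * D < 0 ->
  (C < 0 -> U * D < 0) /\ (0 < C -> 0 < U * D).
Proof.
  intros Hs Hd HU HD. destruct (sg_cases sg Hs) as [->| ->].
  - assert (0 < d) by lra. assert (D < 0) by lra. subst U. split; intros HC.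
    + assert (0 < -2 * C / d) by (apply Rdiv_lt_0_compat; lra). nra.
    + assert (0 < 2 * C / d) by (apply Rdiv_lt_0_compat; lra).
      replace (-2 * C / d) with (- (2 * C / d)) by (field; lra). nra.
  - assert (d < 0) by lra. assert (0 < D) by lra. subst U. split; intros HC.
    + assert (0 < -2 * C / -d) by (apply Rdiv_lt_0_compat; lra).
      replace (-2 * C / d) with (- (-2 * C / - d)) by (field; lra). nra.
    + assert (0 < 2 * C / -d) by (apply Rdiv_lt_0_compat; lra).
      replace (-2 * C / d) with (2 * C / - d) by (field; lra). nra.
Qed.

Lemma jac_at a1 a2 b1 b2 c1 c2 f u v : 0 < 1 + f * v ->
  a1 = (1 + f * v) * (b1 * u + c1 * v) -> a2 = b2 * v + c2 * u ->
  partials_exist (Fu a1 b1 c1) (Gv a2 b2 c2) f u v /\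
  j11 (Fu a1 b1 c1) f u v = - b1 * u /\
  j12 (Fu a1 b1 c1) f u v = - u * (a1 * f / (1 + f * v) ^ 2 + c1) /\
  j11 (Gv a2 b2 c2) f u v = - c2 * v /\
  j12 (Gv a2 b2 c2) f u v = - b2 * v.
Proof.
  intros Hw Ha1 Ha2.
  destruct (jac_F a1 b1 c1 f u v ltac:(lra)) as [F1 [F2 [F3 F4]]].
  destruct (jac_G a2 b2 c2 f u v) as [G1 [G2 [G3 G4]]].
  unfold partials_exist, j11, j12. rewrite F2, F4, G2, G4.
  repeat split; auto.
  all: try (unfold Rdiv; ring).
  all: try (rewrite Ha2; ring).
  rewrite Ha1 at 1. field. lra.
Qed.

Lemma jac_E3 a1 a2 b1 b2 c1 c2 f v : 0 < 1 + f * v -> a2 = b2 * v ->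
  partials_exist (Fu a1 b1 c1) (Gv a2 b2 c2) f 0 v /\
  j11 (Fu a1 b1 c1) f 0 v = a1 / (1 + f * v) - c1 * v /\
  j12 (Fu a1 b1 c1) f 0 v = 0 /\
  j11 (Gv a2 b2 c2) f 0 v = - c2 * v /\
  j12 (Gv a2 b2 c2) f 0 v = - a2.
Proof.
  intros Hw Ha2.
  destruct (jac_F a1 b1 c1 f 0 v ltac:(lra)) as [F1 [F2 [F3 F4]]].
  destruct (jac_G a2 b2 c2 f 0 v) as [G1 [G2 [G3 G4]]].
  unfold partials_exist, j11, j12. rewrite F2, F4, G2, G4.
  repeat split; auto.
  all: try (unfold Rdiv; ring).
  rewrite Ha2; ring.
Qed.

Lemma prod_bound a b A B : Rabs a < A -> Rabs b < B -> Rabs (a * b) < A * B.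
Proof.
  intros Ha Hb. rewrite Rabs_mult. pose proof (Rabs_pos a). pose proof (Rabs_pos b).
  nra.
Qed.

Lemma sgn_mul1 u D K : u * D < 0 -> 0 < D * K -> u * K < 0.
Proof. intros H1 H2. destruct (Rlt_dec 0 D) as [L|L].
  - assert (u < 0) by nra. assert (0 < K) by nra. nra.
  - assert (D < 0) by (destruct (Req_dec D 0); [subst; lra | lra]).
    assert (0 < u) by nra. assert (K < 0) by nra. nra. Qed.

Lemma sgn_mul2 u D K : 0 < u * D -> 0 < D * K -> 0 < u * K.
Proof. intros H1 H2. destruct (Rlt_dec 0 D) as [L|L].
  - assert (0 < u) by nra. assert (0 < K) by nra. nra.
  - assert (D < 0) by (destruct (Req_dec D 0); [subst; lra | lra]).
    assert (u < 0) by nra. assert (K < 0) by nra. nra. Qed.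


Theorem mainTheorem12 (a1 a2 b1 b2 c1 c2 : R)
  (ha1 : 0 < a1) (ha2 : 0 < a2) (hb1 : 0 < b1) (hb2 : 0 < b2)
  (hc1 : 0 < c1) (hc2 : 0 < c2) :
  let vstar := a2 / b2 in
  let fstar := b2 * (a1 * b2 - a2 * c1) / (a2 ^ 2 * c1) in
  a1 * fstar / (1 + fstar * vstar) ^ 2 + c1 - b1 * b2 / c2 <> 0 ->
  transcritical_bifurcation (Fu a1 b1 c1) (Gv a2 b2 c2) fstar 0 vstar.
Proof.
  intros vs fs HD.
  assert (Hvs : vs = a2 / b2) by reflexivity.
  assert (Hfs : fs = b2 * (a1 * b2 - a2 * c1) / (a2 ^ 2 * c1)) by reflexivity.
  clearbody vs fs.
  set (D := a1 * fs / (1 + fs * vs) ^ 2 + c1 - b1 * b2 / c2) in HD.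
  assert (Dfold : D = a1 * fs / (1 + fs * vs) ^ 2 + c1 - b1 * b2 / c2) by reflexivity.
  clearbody D.
  assert (vs_pos : 0 < vs) by (rewrite Hvs; apply Rdiv_lt_0_compat; lra).
  set (k := c2 / b2).
  assert (k_pos : 0 < k) by (apply Rdiv_lt_0_compat; lra).
  set (g := b1 - c1 * k).
  set (ws := 1 + fs * vs).
  assert (Hws : ws = a1 / (c1 * vs)).
  { unfold ws. rewrite Hfs, Hvs. field. lra. }
  assert (ws_pos : 0 < ws) by (rewrite Hws; apply Rdiv_lt_0_compat; nra).
  set (Af := fun f => - f * k * g).
  set (Bf := fun f => (1 + f * vs) * g - f * k * c1 * vs).
  set (Cf := fun f => c1 * vs * (1 + f * vs) - a1).
  assert (HCf : forall f, Cf f = c1 * vs ^ 2 * (f - fs)).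
  { intros f. unfold Cf. rewrite Hfs, Hvs. field. lra. }
  assert (HBs : Bf fs = - ws * k * D).
  { assert (Ha1 : a1 = c1 * vs * ws) by (rewrite Hws; field; nra).
    unfold Bf. rewrite Dfold. unfold ws in Ha1 |- *. rewrite Ha1. unfold g, k. field.
    fold ws. repeat split; nra. }
  assert (HBs0 : Bf fs <> 0).
  { rewrite HBs. intros H. apply HD. apply Rmult_integral in H. destruct H as [H|H]; [|exact H].
    apply Rmult_integral in H. destruct H; lra. }
  set (sg := if Rlt_dec 0 (Bf fs) then 1 else -1).
  assert (Hsg : sg * sg = 1) by (unfold sg; destruct Rlt_dec; lra).
  assert (HsgB : 0 < sg * Bf fs).
  { unfold sg; destruct Rlt_dec; [nra|]. assert (Bf fs < 0) by lra. nra. }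
  set (Df := fun f => Bf f ^ 2 - 4 * Af f * Cf f).
  set (U := fun f => -2 * Cf f / (Bf f + sg * sqrt (Df f))).
  set (q1 := fun f => vs - k * U f).
  set (Kf := fun f => a1 * f / (1 + f * q1 f) ^ 2 + c1 - b1 * b2 / c2).
  assert (HDfs : Df fs = Bf fs ^ 2).
  { unfold Df. rewrite (HCf fs). ring. }
  assert (Hsq : sg * sqrt (Df fs) = Bf fs).
  { rewrite HDfs. rewrite <- Rsqr_pow2, sqrt_Rsqr_abs. unfold sg; destruct Rlt_dec.
    - rewrite Rabs_right; lra.
    - rewrite Rabs_left; lra. }
  assert (HUs : U fs = 0).
  { unfold U. rewrite (HCf fs). unfold Rdiv. ring. }
  assert (Hq1s : q1 fs = vs).
  { unfold q1. rewrite HUs. ring. }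
  assert (HKs : Kf fs = D).
  { unfold Kf. rewrite Hq1s, Dfold. reflexivity. }
  assert (HAd : forall f, ex_derive Af f) by (intros; unfold Af; auto_derive; auto).
  assert (HBd : forall f, ex_derive Bf f) by (intros; unfold Bf; auto_derive; auto).
  assert (HCd : forall f, ex_derive Cf f) by (intros; unfold Cf; auto_derive; auto).
  assert (HDd : forall f, ex_derive Df f) by (intros; unfold Df; auto_derive; auto).
  assert (HUd : forall f, 0 < Df f -> Bf f + sg * sqrt (Df f) <> 0 -> ex_derive U f).
  { intros f H1 H2. unfold U. auto_derive; repeat split; auto. }
  assert (Hq1d : forall f, 0 < Df f -> Bf f + sg * sqrt (Df f) <> 0 -> ex_derive q1 f).
  { intros f H1 H2. unfold q1. auto_derive; repeat split; auto. }
  assert (HDpos : 0 < Df fs) by (rewrite HDfs; nra).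
  assert (Hdpos : 0 < sg * (Bf fs + sg * sqrt (Df fs))) by (rewrite Hsq; nra).
  assert (Hdnz : Bf fs + sg * sqrt (Df fs) <> 0) by (rewrite Hsq; nra).
  assert (HUds : ex_derive U fs) by (apply HUd; auto).
  assert (Hq1ds : ex_derive q1 fs) by (apply Hq1d; auto).
  assert (HKd : ex_derive Kf fs).
  { unfold Kf. auto_derive. rewrite Hq1s. fold ws. repeat split; auto; nra. }
  set (As := Af fs). set (m := sg * Bf fs).
  assert (m_pos : 0 < m) by exact HsgB.
  assert (As1 : 0 < Rabs As + 1) by (pose proof (Rabs_pos As); lra).
  assert (fs1 : 0 < Rabs fs + 1) by (pose proof (Rabs_pos fs); lra).
  set (eps := Rmin (vs/2) (Rmin (m/(4*(Rabs As + 1))) (ws/(4*(Rabs fs + 1))))).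
  assert (eps_pos : 0 < eps).
  { unfold eps. repeat apply Rmin_pos; apply Rdiv_lt_0_compat; try lra. }
  assert (eps1 : eps <= vs/2) by apply Rmin_l.
  assert (eps2 : eps <= m/(4*(Rabs As + 1))) by (eapply Rle_trans; [apply Rmin_r|apply Rmin_l]).
  assert (eps3 : eps <= ws/(4*(Rabs fs + 1))) by (eapply Rle_trans; [apply Rmin_r|apply Rmin_r]).
  pose proof (ev_d Df fs 0 (Df fs + 1) (HDd fs) ltac:(lra)) as E1.
  pose proof (ev_d (fun f => sg * (Bf f + sg * sqrt (Df f))) fs 0 (sg * (Bf fs + sg * sqrt (Df fs)) + 1)
     ltac:(auto_derive; repeat split; auto) ltac:(lra)) as E2.
  pose proof (ev_d (fun f => 1 + f * vs) fs (ws/2) (ws + 1) ltac:(auto_derive; auto) ltac:(cbv beta; fold ws; lra)) as E3.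
  pose proof (ev_d (fun f => f) fs (- (Rabs fs + 1)) (Rabs fs + 1) ltac:(auto_derive; auto) (abs_bounds fs)) as E4.
  pose proof (ev_d (fun f => sg * Bf f) fs (m/2) (m + 1) ltac:(auto_derive; repeat split; auto) ltac:(cbv beta; fold m; lra)) as E5.
  pose proof (ev_d Af fs (- (Rabs As + 1)) (Rabs As + 1) (HAd fs) (abs_bounds As)) as E6.
  pose proof (ev_d U fs (- eps) eps HUds ltac:(rewrite HUs; lra)) as E7.
  pose proof (ev_d q1 fs (vs - eps) (vs + eps) Hq1ds ltac:(rewrite Hq1s; lra)) as E8.
  pose proof (ev_d (fun f => D * Kf f) fs 0 (D * D + 1) ltac:(auto_derive; repeat split; auto)
     ltac:(cbv beta; rewrite HKs; split; [destruct (Rlt_dec 0 D); nra | lra])) as E9.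
  pose proof (ev_d (fun f => b1 * U f + b2 * q1 f) fs 0 (b2 * vs + 1) ltac:(auto_derive; repeat split; auto)
     ltac:(cbv beta; rewrite HUs, Hq1s; nra)) as E10.
  pose proof (ev_d (fun f => 1 + f * q1 f) fs 0 (ws + 1) ltac:(auto_derive; repeat split; auto)
     ltac:(cbv beta; rewrite Hq1s; fold ws; lra)) as E11.
  pose proof (filter_and _ _ E1 (filter_and _ _ E2 (filter_and _ _ E3 (filter_and _ _ E4
    (filter_and _ _ E5 (filter_and _ _ E6 (filter_and _ _ E7 (filter_and _ _ E8
    (filter_and _ _ E9 (filter_and _ _ E10 E11)))))))))) as EP.
  apply loc_ball in EP. destruct EP as [delta [Hdelta HP]].
  clear E1 E2 E3 E4 E5 E6 E7 E8 E9 E10 E11.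
  assert (HsgD : sg * D < 0).
  { rewrite HBs in HsgB. assert (0 < ws * k) by nra. nra. }
  assert (Hwin : forall mu, Rabs (mu - fs) < delta ->
    0 < Df mu /\ 0 < sg * (Bf mu + sg * sqrt (Df mu)) /\ ws / 2 < 1 + mu * vs /\
    - (Rabs fs + 1) < mu < Rabs fs + 1 /\ m / 2 < sg * Bf mu /\ - (Rabs As + 1) < Af mu < Rabs As + 1 /\
    - eps < U mu < eps /\ vs - eps < q1 mu < vs + eps /\ 0 < D * Kf mu /\
    0 < b1 * U mu + b2 * q1 mu /\ 0 < 1 + mu * q1 mu).
  { intros mu Hmu. specialize (HP mu Hmu). cbv beta in HP. tauto. }
  assert (Hroot : forall mu, Rabs (mu - fs) < delta -> Af mu * U mu ^ 2 + Bf mu * U mu + Cf mu = 0).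
  { intros mu Hmu. destruct (Hwin mu Hmu) as [W1 [W2 _]]. unfold U. unfold Df in *.
    apply quad_root; auto; [lra|]. intros H. rewrite H in W2. lra. }
  assert (Hequ : forall mu, Rabs (mu - fs) < delta -> a1 = (1 + mu * q1 mu) * (b1 * U mu + c1 * q1 mu)).
  { intros mu Hmu. pose proof (Hroot mu Hmu) as R.
    assert (I : (1 + mu * q1 mu) * (b1 * U mu + c1 * q1 mu) - a1 = Af mu * U mu ^ 2 + Bf mu * U mu + Cf mu).
    { unfold q1, Af, Bf, Cf, g. ring. }
    lra. }
  assert (Ha2q : forall mu, a2 = b2 * q1 mu + c2 * U mu).
  { intros mu. unfold q1, k. rewrite Hvs. field. lra. }
  assert (Ha2v : a2 = b2 * vs) by (rewrite Hvs; field; lra).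
  assert (HU_D : forall mu, Rabs (mu - fs) < delta ->
     (mu < fs -> U mu * D < 0) /\ (fs < mu -> 0 < U mu * D)).
  { intros mu Hmu. destruct (Hwin mu Hmu) as [W1 [W2 _]].
    destruct (sign_UD sg (U mu) (Cf mu) (Bf mu + sg * sqrt (Df mu)) D Hsg W2 eq_refl HsgD) as [S1 S2].
    rewrite HCf in S1, S2. assert (0 < c1 * vs ^ 2) by (apply Rmult_lt_0_compat; [lra| apply pow_lt; lra]).
    split; intros; [apply S1 | apply S2]; nra. }
  exists delta, eps, U, q1, (fun _ => 0), (fun _ => vs).
  split; [exact Hdelta|]. split; [exact eps_pos|].
  split; [exact HUs|]. split; [exact Hq1s|]. split; [reflexivity|]. split; [reflexivity|].
  split.
  { intros mu Hmu. destruct (Hwin mu Hmu) as [W1 [W2 _]].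
    assert (Hd : Bf mu + sg * sqrt (Df mu) <> 0) by (intros H; rewrite H in W2; lra).
    split; [|split; [|split]].
    - exact (@ex_derive_continuous R_AbsRing R_NormedModule U mu (HUd mu W1 Hd)).
    - exact (@ex_derive_continuous R_AbsRing R_NormedModule q1 mu (Hq1d mu W1 Hd)).
    - apply continuous_const.
    - apply continuous_const. }
  split.
  { intros mu Hmu. pose proof (Hequ mu Hmu) as E. destruct (Hwin mu Hmu) as [_ [_ [W3 [_ [_ [_ [_ [_ [_ [_ W11]]]]]]]]]].
    unfold equilibrium, Fu, Gv. split; split.
    - replace (a1 * U mu / (1 + mu * q1 mu)) with (U mu * (b1 * U mu + c1 * q1 mu)).
      + ring.
      + rewrite E. field. lra.
    - rewrite (Ha2q mu) at 1. ring.
    - replace (a1 * 0 / (1 + mu * vs)) with 0 by (field; lra). ring.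
    - rewrite Ha2v. ring. }
  split.
  { intros mu Hmu Hne Heq. injection Heq as E1 E2.
    destruct (HU_D mu Hmu) as [S1 S2]. destruct (Rlt_dec mu fs) as [L|L].
    - specialize (S1 L). rewrite E1 in S1. lra.
    - assert (fs < mu) by lra. specialize (S2 H). rewrite E1 in S2. lra. }
  split.
  { intros mu x y Hmu Hx Hy Heq.
    destruct (Hwin mu Hmu) as [W1 [W2 [W3 [W4 [W5 [W6 [W7 [W8 [W9 [W10 W11]]]]]]]]]].
    destruct Heq as [EF EG]. unfold Fu, Gv in EF, EG.
    apply Rabs_def2 in Hx. apply Rabs_def2 in Hy.
    assert (ypos : 0 < y) by lra.
    assert (Hy2 : a2 = b2 * y + c2 * x).
    { assert (y * (a2 - b2 * y - c2 * x) = 0) by (rewrite <- EG; ring).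
      apply Rmult_integral in H. destruct H; lra. }
    assert (Hyx : y = vs - k * x).
    { unfold k. rewrite Hvs. apply (Rmult_eq_reg_l b2); [|lra]. field_simplify; lra. }
    assert (Hmy : Rabs (mu * (y - vs)) < (Rabs fs + 1) * eps).
    { apply prod_bound; apply Rabs_def1; lra. }
    assert (Hw : 0 < 1 + mu * y).
    { apply Rabs_def2 in Hmy.
      assert ((Rabs fs + 1) * eps <= ws / 4).
      { apply (Rmult_le_reg_r (/ (Rabs fs + 1))). { apply Rinv_0_lt_compat; lra. }
        replace ((Rabs fs + 1) * eps * / (Rabs fs + 1)) with eps by (field; lra).
        replace (ws / 4 * / (Rabs fs + 1)) with (ws / (4 * (Rabs fs + 1))) by (field; lra). exact eps3. }
      lra. }
    destruct (Req_dec x 0) as [Hx0|Hx0].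
    - right. split; [exact Hx0|]. rewrite Hyx, Hx0. ring.
    - left.
      assert (Ea : a1 = (1 + mu * y) * (b1 * x + c1 * y)).
      { assert (x * (a1 / (1 + mu * y) - b1 * x - c1 * y) = 0).
        { rewrite <- EF. field. lra. }
        apply Rmult_integral in H. destruct H as [H|H]; [contradiction|].
        assert (a1 / (1 + mu * y) = b1 * x + c1 * y) by lra.
        rewrite <- H0. field. lra. }
      assert (Qx : Af mu * x ^ 2 + Bf mu * x + Cf mu = 0).
      { assert (I : (1 + mu * (vs - k * x)) * (b1 * x + c1 * (vs - k * x)) - a1 = Af mu * x ^ 2 + Bf mu * x + Cf mu).
        { unfold Af, Bf, Cf, g. ring. }
        rewrite Hyx in Ea. lra. }
      pose proof (Hroot mu Hmu) as QU.
      assert (Hfac : (x - U mu) * (Af mu * (x + U mu) + Bf mu) = 0).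
      { transitivity ((Af mu * x ^ 2 + Bf mu * x + Cf mu) - (Af mu * U mu ^ 2 + Bf mu * U mu + Cf mu)); [ring|].
        rewrite Qx, QU. ring. }
      assert (Hpos : 0 < sg * (Af mu * (x + U mu) + Bf mu)).
      { assert (HA : Rabs (Af mu * (x + U mu)) < (Rabs As + 1) * (2 * eps)).
        { apply prod_bound; apply Rabs_def1; lra. }
        assert ((Rabs As + 1) * (2 * eps) <= m / 2).
        { apply (Rmult_le_reg_r (/ (2 * (Rabs As + 1)))). { apply Rinv_0_lt_compat; lra. }
          replace ((Rabs As + 1) * (2 * eps) * / (2 * (Rabs As + 1))) with eps by (field; lra).
          replace (m / 2 * / (2 * (Rabs As + 1))) with (m / (4 * (Rabs As + 1))) by (field; lra). exact eps2. }
        apply Rabs_def2 in HA. destruct (sg_cases sg Hsg) as [E | E]; rewrite E in *; lra. }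
      apply Rmult_integral in Hfac. destruct Hfac as [H|H].
      + split; [lra|]. rewrite Hyx. unfold q1. replace x with (U mu) by lra. ring.
      + rewrite H in Hpos. lra. }
  assert (Hdet : forall mu, Rabs (mu - fs) < delta ->
     (- b1 * U mu) * (- b2 * q1 mu) - (- U mu * (a1 * mu / (1 + mu * q1 mu) ^ 2 + c1)) * (- c2 * q1 mu)
     = - c2 * (U mu * Kf mu) * q1 mu).
  { intros mu Hmu. destruct (Hwin mu Hmu) as [_ [_ [_ [_ [_ [_ [_ [_ [_ [_ W11]]]]]]]]]].
    unfold Kf. field. lra. }
  assert (HE3 : forall mu, a1 / (1 + mu * vs) - c1 * vs = - Cf mu / (1 + mu * vs) \/ 1 + mu * vs = 0).
  { intros mu. destruct (Req_dec (1 + mu * vs) 0); [right; auto | left]. unfold Cf. field. auto. }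
  split.
  { intros mu [L1 L2]. assert (Hmu : Rabs (mu - fs) < delta) by (apply Rabs_def1; lra).
    destruct (Hwin mu Hmu) as [W1 [W2 [W3 [W4 [W5 [W6 [W7 [W8 [W9 [W10 W11]]]]]]]]]].
    destruct (HU_D mu Hmu) as [S1 _]. specialize (S1 L2).
    pose proof (sgn_mul1 _ _ _ S1 W9) as SK.
    split.
    - destruct (jac_at a1 a2 b1 b2 c1 c2 mu (U mu) (q1 mu) W11 (Hequ mu Hmu) (Ha2q mu)) as [P [J1 [J2 [J3 J4]]]].
      split; [exact P|]. intros l Hl. unfold jac_eigenvalue in Hl. rewrite J1, J2, J3, J4 in Hl.
      eapply stable_quad; [| |exact Hl].
      + lra.
      + rewrite (Hdet mu Hmu). assert (0 < q1 mu) by lra.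
        replace (- c2 * (U mu * Kf mu) * q1 mu) with ((c2 * q1 mu) * (- (U mu * Kf mu))) by ring.
        apply Rmult_lt_0_compat; [apply Rmult_lt_0_compat|]; lra.
    - assert (W3' : 0 < 1 + mu * vs) by lra.
      destruct (jac_E3 a1 a2 b1 b2 c1 c2 mu vs W3' Ha2v) as [P [J1 [J2 [J3 J4]]]].
      split; [exact P|]. unfold jac_eigenvalue. rewrite J1, J2, J3, J4. apply unstable_diag.
      destruct (HE3 mu) as [E|E]; [|lra]. rewrite E. rewrite HCf.
      apply Rdiv_lt_0_compat; [|lra].
      assert (0 < c1 * vs ^ 2) by (apply Rmult_lt_0_compat; [lra| apply pow_lt; lra]).
      assert (0 < c1 * vs ^ 2 * (fs - mu)) by (apply Rmult_lt_0_compat; lra).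
      lra. }
  { intros mu [L1 L2]. assert (Hmu : Rabs (mu - fs) < delta) by (apply Rabs_def1; lra).
    destruct (Hwin mu Hmu) as [W1 [W2 [W3 [W4 [W5 [W6 [W7 [W8 [W9 [W10 W11]]]]]]]]]].
    destruct (HU_D mu Hmu) as [_ S2]. specialize (S2 L1).
    pose proof (sgn_mul2 _ _ _ S2 W9) as SK.
    split.
    - destruct (jac_at a1 a2 b1 b2 c1 c2 mu (U mu) (q1 mu) W11 (Hequ mu Hmu) (Ha2q mu)) as [P [J1 [J2 [J3 J4]]]].
      split; [exact P|]. unfold jac_eigenvalue. rewrite J1, J2, J3, J4.
      apply unstable_quad.
      rewrite (Hdet mu Hmu). assert (0 < q1 mu) by lra.
      replace (- c2 * (U mu * Kf mu) * q1 mu) with (- ((c2 * q1 mu) * (U mu * Kf mu))) by ring.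
      assert (0 < (c2 * q1 mu) * (U mu * Kf mu)) by (apply Rmult_lt_0_compat; [apply Rmult_lt_0_compat|]; lra).
      lra.
    - assert (W3' : 0 < 1 + mu * vs) by lra.
      destruct (jac_E3 a1 a2 b1 b2 c1 c2 mu vs W3' Ha2v) as [P [J1 [J2 [J3 J4]]]].
      split; [exact P|]. intros l Hl. unfold jac_eigenvalue in Hl. rewrite J1, J2, J3, J4 in Hl.
      assert (Hj : a1 / (1 + mu * vs) - c1 * vs < 0).
      { destruct (HE3 mu) as [E|E]; [|lra]. rewrite E. rewrite HCf.
        assert (0 < c1 * vs ^ 2) by (apply Rmult_lt_0_compat; [lra| apply pow_lt; lra]).
        assert (0 < c1 * vs ^ 2 * (mu - fs) / (1 + mu * vs)) by (apply Rdiv_lt_0_compat; [apply Rmult_lt_0_compat|]; lra).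
        unfold Rdiv in *. lra. }
      eapply stable_quad; [| |exact Hl]; [lra|].
      assert (0 < - (a1 / (1 + mu * vs) - c1 * vs) * a2) by (apply Rmult_lt_0_compat; lra). lra. }
Qed.
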